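(* Let $n>3$ be an integer. The inverse of the circulant matrix $\mathrm{circ}(3,-1,0,\ldots,0,-1)$ of order $n$ is \[[\mathrm{circ}(3,-1,0,\ldots,0,-1)]^{-1}=\mathrm{circ}(a_0,a_1,\ldots,a_{n-1}),\] where for $j=0,1,\ldots,n-1$, \[a_j=\frac{2^{n-j}}{\sqrt{5}}\left[\frac{(3-\sqrt{5})^j}{2^n-(3-\sqrt{5})^n}-\frac{(3+\sqrt{5})^j}{2^n-(3+\sqrt{5})^n}\right].\]
   Context: For $c_0,\dots,c_{k-1}$, $\mathrm{circ}(c_0,\ldots,c_{k-1})$ denotes the $k\times k$ circulant matrix whose $(i,j)$-entry is $c_{(j-i)\bmod k}$ (first row $c_0,\dots,c_{k-1}$, each subsequent row the cyclic right shift of the previous one). *)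

(* Defs.v *)
From mathcomp Require Import all_boot all_order all_algebra.
Set Implicit Arguments. Unset Strict Implicit. Unset Printing Implicit Defensive.
Import Order.TTheory GRing.Theory Num.Theory.
Local Open Scope ring_scope.

Definition circ (R : Type) (k : nat) (c : nat -> R) : 'M[R]_k :=
  \matrix_(i < k, j < k) c ((j + k - i) %% k)%N.

Definition circ_row (R : nzRingType) (n : nat) (j : nat) : R :=
  if j == 0%N then 3
  else if (j == 1%N) || (j == n.-1) then -1 else 0.

Definition a_coef (R : rcfType) (n j : nat) : R :=
  let s5 := Num.sqrt (5 : R) in
  (2 ^+ (n - j))%R / s5 *
  ((3 - s5) ^+ j / (2 ^+ n - (3 - s5) ^+ n)
   - (3 + s5) ^+ j / (2 ^+ n - (3 + s5) ^+ n)).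

(* Main.v *)
Require Import Defs.
From mathcomp Require Import all_boot all_order all_algebra.
From mathcomp Require Import ring lra zify.
Import Order.TTheory GRing.Theory Num.Theory.
Local Open Scope ring_scope.

Lemma t_mid (R : fieldType) (x D : R) (e : nat) (hx : x ^+ 2 = 3 * x - 1) :
  3 * (x ^+ e.+1 / D) - x ^+ e / D - x ^+ e.+2 / D = 0.
Proof.
have h : x ^+ e.+2 = x ^+ e * (3 * x - 1) by rewrite -hx -exprD addn2.
rewrite h exprS; ring.
Qed.

Lemma t_zero (R : fieldType) (x : R) (p : nat) (hx : x ^+ 2 = 3 * x - 1)
  (hD : 1 - x ^+ p.+1 != 0) :
  3 * (x ^+ 0 / (1 - x ^+ p.+1)) - x ^+ p / (1 - x ^+ p.+1)
   - x ^+ 1 / (1 - x ^+ p.+1) = 3 - x.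
Proof.
have key : 3 - x ^+ p - x = (3 - x) * (1 - x ^+ p.+1).
  have h2 : x ^+ p * x * x = x ^+ p * (3 * x - 1) by rewrite -mulrA -expr2 hx.
  apply/eqP; rewrite -subr_eq0 exprSr.
  have -> : 3 - x ^+ p - x - (3 - x) * (1 - x ^+ p * x)
     = x ^+ p * (3 * x - 1) - x ^+ p * x * x by ring.
  by rewrite h2 subrr.
have -> : 3 * (x ^+ 0 / (1 - x ^+ p.+1)) - x ^+ p / (1 - x ^+ p.+1)
   - x ^+ 1 / (1 - x ^+ p.+1) = (3 - x ^+ p - x) / (1 - x ^+ p.+1) by ring.
by rewrite key mulfK.
Qed.

Lemma t_last (R : fieldType) (x : R) (q : nat) (hx : x ^+ 2 = 3 * x - 1)
  (hD : 1 - x ^+ q.+2 != 0) :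
  3 * (x ^+ q.+1 / (1 - x ^+ q.+2)) - x ^+ q / (1 - x ^+ q.+2)
   - x ^+ 0 / (1 - x ^+ q.+2) = -1.
Proof.
have h : x ^+ q.+2 = x ^+ q * (3 * x - 1) by rewrite -hx -exprD addn2.
have -> : 3 * (x ^+ q.+1 / (1 - x ^+ q.+2)) - x ^+ q / (1 - x ^+ q.+2)
   - x ^+ 0 / (1 - x ^+ q.+2) = - (1 - x ^+ q.+2) / (1 - x ^+ q.+2).
  set D := 1 - x ^+ q.+2.
  have -> : D = 1 - x ^+ q * (3 * x - 1) by rewrite /D h.
  rewrite exprS; ring.
by rewrite mulNr divff.
Qed.

Definition al (R : rcfType) : R := (3 - Num.sqrt 5) / 2.
Definition be (R : rcfType) : R := (3 + Num.sqrt 5) / 2.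
Definition bcoef (R : rcfType) (n j : nat) : R :=
  (al R ^+ j / (1 - al R ^+ n) - be R ^+ j / (1 - be R ^+ n)) / Num.sqrt 5.

Lemma s5_facts (R : rcfType) :
  Num.sqrt (5 : R) ^+ 2 = 5 /\ 1 < Num.sqrt (5 : R) < 3.
Proof.
have h5 : Num.sqrt (5 : R) ^+ 2 = 5 by rewrite sqr_sqrtr // ler0n.
have hp : 0 <= Num.sqrt (5 : R) by apply: sqrtr_ge0.
split => //; apply/andP; split; nra.
Qed.

Lemma al_facts (R : rcfType) :
  al R ^+ 2 = 3 * al R - 1 /\ 0 <= al R < 1.
Proof.
have [h5 /andP [h1 h3]] := s5_facts R.
rewrite /al; split.
  rewrite expr2; rewrite expr2 in h5; nra.
apply/andP; split; lra.
Qed.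

Lemma be_facts (R : rcfType) :
  be R ^+ 2 = 3 * be R - 1 /\ 1 < be R.
Proof.
have [h5 /andP [h1 h3]] := s5_facts R.
rewrite /be; split.
  rewrite expr2; rewrite expr2 in h5; nra.
lra.
Qed.

Lemma al_D (R : rcfType) (n : nat) : (0 < n)%N -> 1 - al R ^+ n != 0.
Proof.
move=> hn; have [_ /andP [h0 h1]] := al_facts R.
have : al R ^+ n < 1 by rewrite exprn_ilt1 // -lt0n.
rewrite subr_eq0; lra.
Qed.

Lemma be_D (R : rcfType) (n : nat) : (0 < n)%N -> 1 - be R ^+ n != 0.
Proof.
move=> hn; have [_ h1] := be_facts R.
have : 1 < be R ^+ n by rewrite exprn_egt1 // -lt0n.
rewrite subr_eq0; lra.
Qed.

Lemma a_coef_b (R : rcfType) (n j : nat) : (0 < n)%N -> (j <= n)%N ->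
  let s5 := Num.sqrt (5 : R) in
  (2 ^+ (n - j))%R / s5 *
  ((3 - s5) ^+ j / (2 ^+ n - (3 - s5) ^+ n)
   - (3 + s5) ^+ j / (2 ^+ n - (3 + s5) ^+ n)) = bcoef R n j.
Proof.
move=> hn hj s5.
have [h5 /andP [h1 h3]] := s5_facts R.
have s5n : s5 != 0 by rewrite /s5; apply/eqP => e; rewrite e in h1; lra.
have Da := al_D R n hn; have Db := be_D R n hn.
have ea : 3 - s5 = 2 * al R by rewrite /al [2 * _]mulrC divfK // pnatr_eq0.
have eb : 3 + s5 = 2 * be R by rewrite /be [2 * _]mulrC divfK // pnatr_eq0.
have e2 : (2 : R) ^+ n = 2 ^+ (n - j) * 2 ^+ j by rewrite -exprD subnK.
have t2 : (2 : R) ^+ (n - j) != 0 by rewrite expf_eq0 pnatr_eq0 andbF.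
have t2' : (2 : R) ^+ j != 0 by rewrite expf_eq0 pnatr_eq0 andbF.
rewrite ea eb [(2 * al R) ^+ _]exprMn [(2 * al R) ^+ _]exprMn [(2 * be R) ^+ _]exprMn [(2 * be R) ^+ _]exprMn.
have -> : (2 : R) ^+ n - 2 ^+ n * al R ^+ n = 2 ^+ (n-j) * 2 ^+ j * (1 - al R ^+ n) by rewrite e2; ring.
have -> : (2 : R) ^+ n - 2 ^+ n * be R ^+ n = 2 ^+ (n-j) * 2 ^+ j * (1 - be R ^+ n) by rewrite e2; ring.
rewrite /bcoef -/s5; field.
by rewrite s5n Da Db t2 t2'.
Qed.

Lemma b_key (R : rcfType) (q d : nat) : (d < q.+3)%N ->
  3 * bcoef R q.+3 d - bcoef R q.+3 ((d + q.+3 - 1) %% q.+3)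
    - bcoef R q.+3 ((d + 1) %% q.+3) = (d == 0%N)%:R.
Proof.
move=> hd.
have [h5 /andP [h1 h3]] := s5_facts R.
have s5n : Num.sqrt (5:R) != 0 by apply/eqP => e; rewrite e in h1; lra.
have [ha _] := al_facts R; have [hb _] := be_facts R.
have Da := al_D R q.+3 isT; have Db := be_D R q.+3 isT.
have split3 : forall a1 a2 a3 : nat, 3 * bcoef R q.+3 a1 - bcoef R q.+3 a2 - bcoef R q.+3 a3
  = ((3 * (al R ^+ a1 / (1 - al R ^+ q.+3)) - al R ^+ a2 / (1 - al R ^+ q.+3)
       - al R ^+ a3 / (1 - al R ^+ q.+3))
    - (3 * (be R ^+ a1 / (1 - be R ^+ q.+3)) - be R ^+ a2 / (1 - be R ^+ q.+3)
       - be R ^+ a3 / (1 - be R ^+ q.+3))) / Num.sqrt 5.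
  by move=> a1 a2 a3; rewrite /bcoef; ring.
case: d hd => [|e] hd.
  have -> : ((0 + q.+3 - 1) %% q.+3 = q.+2)%N by rewrite add0n subn1 /= modn_small.
  have -> : ((0 + 1) %% q.+3 = 1)%N by rewrite add0n modn_small.
  rewrite split3 !t_zero //= /al /be; field; done.
case: (ltngtP e.+1 q.+2) => he.
- have -> : ((e.+1 + q.+3 - 1) %% q.+3 = e)%N.
    have -> : (e.+1 + q.+3 - 1 = e + q.+3)%N by lia.
    by rewrite modnDr modn_small //; lia.
  have -> : ((e.+1 + 1) %% q.+3 = e.+2)%N by rewrite addn1 modn_small.
  by rewrite split3 !t_mid // subrr mul0r.
- lia.
- case: he => ->.
  have -> : ((q.+2 + q.+3 - 1) %% q.+3 = q.+1)%N.
    have -> : (q.+2 + q.+3 - 1 = q.+1 + q.+3)%N by lia.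
    by rewrite modnDr modn_small.
  have -> : ((q.+2 + 1) %% q.+3 = 0)%N by rewrite addn1 modnn.
  by rewrite split3 !t_last // subrr mul0r.
Qed.

Lemma subE (N : nat) (j l : 'I_N.+1) : ((j + N.+1 - l) %% N.+1)%N = nat_of_ord (j - l)%R.
Proof.
rewrite /= modnDmr addnBA //; exact: ltnW.
Qed.

Lemma circE (R : Type) (N : nat) (c : nat -> R) (i j : 'I_N.+1) :
  circ N.+1 c i j = c (nat_of_ord (j - i)%R).
Proof. by rewrite /circ mxE subE. Qed.

Lemma aE (R : rcfType) (n j : nat) : (0 < n)%N -> (j <= n)%N -> a_coef R n j = bcoef R n j.
Proof. by move=> h1 h2; rewrite /a_coef a_coef_b. Qed.

Lemma prod_entry (R : rcfType) (m : nat) (i j : 'I_(m.+4)) :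
 (circ m.+4 (circ_row R m.+4) *m circ m.+4 (a_coef R m.+4)) i j = (1%:M : 'M[R]_(m.+4)) i j.
Proof.
rewrite !mxE.
under eq_bigr => k _ do rewrite !circE.
rewrite (reindex_inj (addrI i)).
under eq_bigr => k _ do rewrite [(i + k)%R]addrC addrK opprD addrA addrAC.
have hd : (i == j) = (j - i == 0)%R by rewrite subr_eq0 eq_sym.
rewrite hd; set d := (j - i)%R; clearbody d.
rewrite big_ord_recl big_ord_recl big_ord_recr.
rewrite big1; last first.
 move=> k _.
 rewrite /circ_row /= /bump /=.
 have := ltn_ord k.
 move=> hk; rewrite ifF ?mul0r //; apply/negbTE; apply/eqP; lia.
rewrite -!subE /= add0r.
have -> : (d == 0)%R = (nat_of_ord d == 0)%N by [].
rewrite /bump /circ_row /= subn0 modnDr (modn_small (ltn_ord d)).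
have -> : (d + m.+4 - (1 + (1 + m.+1)) = d + 1)%N by lia.
have -> : (d + m.+4 - (1 + 0) = d + m.+4 - 1)%N by [].
rewrite eqxx.
rewrite !aE ?(ltnW (ltn_ord d)) //; try by apply/ltnW; rewrite ltn_pmod.
rewrite -(@b_key R m.+1 d (ltn_ord d)); ring.
Qed.

Theorem mainTheorem7 (R : rcfType) (n : nat) (hn : (3 < n)%N) :
  circ n (circ_row R n) \in unitmx /\
  invmx (circ n (circ_row R n)) = circ n (a_coef R n).
Proof.
case: n hn => [|[|[|[|m]]]] // _.
have M : circ m.+4 (circ_row R m.+4) *m circ m.+4 (a_coef R m.+4) = 1%:M.
  by apply/matrixP => i j; apply: prod_entry.
have [u1 _] := mulmx1_unit M.
split => //.
by rewrite -[invmx _]mulmx1 -M mulmxA mulVmx // mul1mx.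
Qed.
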